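(* For every $N\ge 2$ and every $x\in\{0,1,\dots,N-2\}$, $$|2p(x)-1|\le\frac{1}{(N-x-2)!}.$$
   Context: For $\sigma\in\mathcal{S}_N$, $\eta_1(\sigma)$ is the number of fixed points and $\eta_2(\sigma)$ the number of 2-cycles of $\sigma$; $\nu$ is the uniform measure on $\mathcal{S}_N$, and for $x\in\{0,\dots,N\}\setminus\{N-1\}$, $p(x)=\mathbb{E}_\nu[\eta_2\mid\eta_1=x]$. *)

(* Defs.v *)
From mathcomp Require Import all_boot all_order all_algebra all_fingroup.
Set Implicit Arguments. Unset Strict Implicit. Unset Printing Implicit Defensive.
Import GRing.Theory Num.Theory.
Local Open Scope ring_scope.

Definition eta1 (N : nat) (s : 'S_N) : nat := #|[set i | s i == i]|.

Definition eta2 (N : nat) (s : 'S_N) : nat :=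
  #|[set C in porbits s | #|C| == 2%N]|.

(* p(x) = E_nu[eta2 | eta1 = x] for nu uniform on S_N:
   the uniform normalisation cancels, leaving the average of eta2 over
   the permutations with exactly x fixed points. *)
Definition p (N x : nat) : rat :=
  (\sum_(s : 'S_N | eta1 s == x) (eta2 s)%:R) /
  (#|[set s : 'S_N | eta1 s == x]|)%:R.

(* Main.v *)
Require Import Defs.
From mathcomp Require Import all_boot all_order all_algebra all_fingroup.
Import GRing.Theory Num.Theory.

Lemma card_set_sum (T : finType) (P : pred T) :
  #|[set s : T | P s]| = \sum_(s : T) (P s : nat).
Proof.
rewrite cardsE -sum1_card big_mkcond /=; apply: eq_bigr => s _.
by rewrite unfold_in; case: (P s).
Qed.

Lemma eta1_sum N (s : 'S_N) : eta1 s = \sum_(k : 'I_N) (s k == k : nat).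
Proof. by rewrite /eta1 card_set_sum. Qed.

Lemma sum_fix n (i0 : 'I_n.+1) (G : 'S_n.+1 -> nat) :
  \sum_(s : 'S_n.+1 | s i0 == i0) G s = \sum_(s : 'S_n) G (lift_perm i0 i0 s).
Proof.
rewrite (reindex (lift_perm i0 i0)); last first.
  pose ulsf i (s : 'S_n.+1) k := odflt k (unlift (s i) (s (lift i k))).
  have ulsfK i (s : 'S_n.+1) k: lift (s i) (ulsf i s k) = s (lift i k).
    rewrite /ulsf; have:= neq_lift i k.
    by rewrite -(can_eq (permK s)) => /unlift_some[] ? ? ->.
  have inj_ulsf: injective (ulsf i0 _).
    move=> s; apply: can_inj (ulsf (s i0) s^-1%g) _ => k'.
    by rewrite {1}/ulsf ulsfK !permK liftK.
  exists (fun s => perm (inj_ulsf s)) => [s _ | s].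
    by apply/permP=> k'; rewrite permE /ulsf lift_perm_lift lift_perm_id liftK.
  rewrite inE => /(s _ =P _) => si0; apply/permP=> k.
  case: (unliftP i0 k) => [k'|] ->; rewrite ?lift_perm_id ?si0 //.
  by rewrite lift_perm_lift permE -{1}si0 ulsfK.
by apply: eq_bigl => s; rewrite lift_perm_id eqxx.
Qed.

Lemma eta1_lift n (i : 'I_n.+1) (s : 'S_n) :
  eta1 (lift_perm i i s) = (eta1 s).+1.
Proof.
rewrite !eta1_sum (bigD1_ord i) //= lift_perm_id eqxx add1n; congr _.+1.
by apply: eq_bigr => k _; rewrite lift_perm_lift (inj_eq (@lift_inj _ i)).
Qed.

Definition F N x := #|[set s : 'S_N | eta1 s == x]|.

Lemma F_sum N x : F N x = \sum_(s : 'S_N) (eta1 s == x : nat).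
Proof. by rewrite /F card_set_sum. Qed.

Lemma L2 n x : x.+1 * F n.+1 x.+1 = n.+1 * F n x.
Proof.
have -> : x.+1 * F n.+1 x.+1 = \sum_(s : 'S_n.+1) (eta1 s == x.+1) * eta1 s.
  rewrite F_sum big_distrr /=; apply: eq_bigr => s _.
  by case: eqP => [->|]; rewrite ?muln1 ?muln0 ?mul0n ?mul1n.
under eq_bigr do rewrite eta1_sum big_distrr /=.
rewrite exchange_big /=.
rewrite -[n.+1 in RHS]card_ord -sum_nat_const; apply: eq_bigr => i _.
rewrite (bigID (fun s : 'S_n.+1 => s i == i)) /= [X in _ + X]big1; last first.
  by move=> s /negbTE ->; rewrite muln0.
rewrite addn0 sum_fix F_sum; apply: eq_bigr => s _.
by rewrite lift_perm_id eqxx -eta1_sum eta1_lift eqSS muln1.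
Qed.
Lemma porbit2 (T : finType) (s : {perm T}) i :
  (#|porbit s i| == 2) = (s i != i) && (s (s i) == i).
Proof.
apply/idP/idP.
  move=> /eqP h.
  have := uniq_traject_porbit s i; rewrite h /= inE andbT => ne.
  have := iter_porbit s i; rewrite h /= => ->.
  by rewrite eq_sym ne eqxx.
case/andP => ne ssi.
have -> : porbit s i = [set i; s i].
  apply/setP => y; apply/porbitP/idP.
    case=> k ->; rewrite permX; elim: k => [|k IH] /=; first by rewrite !inE eqxx.
    move: IH; rewrite !inE => /orP[] /eqP ->; first by rewrite eqxx orbT.
    by rewrite (eqP ssi) eqxx.
  rewrite !inE => /orP[] /eqP ->; first by exists 0; rewrite expg0 perm1.
  by exists 1; rewrite expg1.
by rewrite cards2 (eq_sym i) ne.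
Qed.

Lemma eta2_sum N (s : 'S_N) :
  2 * eta2 s = \sum_(i : 'I_N) ((s i != i) && (s (s i) == i) : nat).
Proof.
rewrite -card_set_sum.
under eq_finset do rewrite -porbit2.
set Q := [set C in porbits s | #|C| == 2].
rewrite /eta2 -/Q mulnC.
symmetry; apply: (card_uniform_partition (P := Q)).
  by move=> C; rewrite inE => /andP[_ /eqP].
apply/and3P; split.
- apply/eqP/setP => y; rewrite inE; apply/bigcupP/idP.
    move=> [C]; rewrite inE => /andP[/imsetP[a _ ->] c2] ya.
    by rewrite -eq_porbit_mem in ya; rewrite (eqP ya).
  move=> h; exists (porbit s y); last exact: porbit_id.
  by rewrite inE h andbT imset_f.
- apply/trivIsetP => A B; rewrite !inE => /andP[/imsetP[a _ ->] _] /andP[/imsetP[b _ ->] _].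
  apply: contraR; rewrite -setI_eq0 => /set0Pn[y /setIP[ya yb]].
  rewrite -eq_porbit_mem in ya; rewrite -eq_porbit_mem in yb.
  by rewrite -(eqP ya) -(eqP yb).
- by rewrite inE cards0 andbF.
Qed.
Lemma sum_eq1 N (i : 'I_N) : \sum_(k : 'I_N) (k == i : nat) = 1.
Proof. by rewrite (bigD1 i) //= eqxx big1 // => k /negbTE ->. Qed.

Lemma eta1_tperm N (u : 'S_N) i j : i != j -> u i = i -> u j = j ->
  eta1 u = (eta1 (u * tperm i j)%g).+2.
Proof.
move=> nij ui uj; rewrite !eta1_sum.
have -> : \sum_k (u k == k : nat) =
   \sum_k (((u * tperm i j)%g k == k : nat) + (k == i : nat) + (k == j : nat)).
  apply: eq_bigr => k _; rewrite permM.
  have [->|nki] := eqVneq k i; first by rewrite ui tpermL eqxx (negbTE nij) eq_sym (negbTE nij).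
  have [->|nkj] := eqVneq k j; first by rewrite uj tpermR eqxx (negbTE nij).
  have nui : u k != i by rewrite -{1}ui (inj_eq perm_inj).
  have nuj : u k != j by rewrite -{1}uj (inj_eq perm_inj).
  by rewrite tpermD // 1?eq_sym // !addn0.
by rewrite !big_split /= !sum_eq1 !addn1.
Qed.

Lemma swap_count n (i j : 'I_n.+2) x : i != j ->
  \sum_(s : 'S_n.+2) ((s i == j) && (s j == i) && (eta1 s == x) : nat) = F n x.
Proof.
move=> nij.
rewrite (reindex_inj (mulIg (tperm i j))) /=.
have -> : \sum_(u : 'S_n.+2) (((u * tperm i j)%g i == j) && ((u * tperm i j)%g j == i)
      && (eta1 (u * tperm i j)%g == x) : nat)
   = \sum_(u : 'S_n.+2) ((u i == i) * ((u j == j) && (eta1 u == x.+2))).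
  apply: eq_bigr => u _; rewrite !permM.
  rewrite !(can2_eq (tpermK i j) (tpermK i j)) tpermR tpermL.
  have [ui|] := eqVneq (u i) i; last by rewrite /= mul0n.
  have [uj|] := eqVneq (u j) j; last by rewrite /= muln0.
  by rewrite (@eta1_tperm _ u i j nij ui uj) eqSS /= mul1n.
rewrite (bigID (fun u : 'S_n.+2 => u i == i)) /= [X in _ + X]big1; last first.
  by move=> u /negbTE ->.
rewrite addn0 sum_fix.
case: (unliftP i j) => [j' ->|eji]; last by rewrite eji eqxx in nij.
have -> : \sum_(s : 'S_n.+1) ((lift_perm i i s i == i) *
     ((lift_perm i i s (lift i j') == lift i j') && (eta1 (lift_perm i i s) == x.+2)))
   = \sum_(s : 'S_n.+1) ((s j' == j') * (eta1 s == x.+1)).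
  apply: eq_bigr => s _.
  rewrite lift_perm_id eqxx lift_perm_lift (inj_eq (@lift_inj _ i)) eta1_lift eqSS mul1n.
  by case: (_ == j') => //=; rewrite mul1n.
rewrite (bigID (fun u : 'S_n.+1 => u (j' : 'I_n.+1) == j')) /= [X in _ + X]big1; last first.
  by move=> u /negbTE ->.
rewrite addn0 sum_fix F_sum; apply: eq_bigr => s _.
by rewrite lift_perm_id eqxx eta1_lift eqSS mul1n.
Qed.

Lemma L3 n x : 2 * \sum_(s : 'S_n.+2 | eta1 s == x) eta2 s = n.+2 * (n.+1 * F n x).
Proof.
rewrite big_distrr /= big_mkcond /=.
have -> : \sum_(s : 'S_n.+2) (if eta1 s == x then 2 * eta2 s else 0) =
   \sum_(s : 'S_n.+2) \sum_(i : 'I_n.+2) \sum_(j : 'I_n.+2 | j != i)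
      ((s i == j) && (s j == i) && (eta1 s == x) : nat).
  apply: eq_bigr => s _.
  case: eqP => [_|_]; last first.
    by rewrite big1 // => i _; rewrite big1 // => j _; rewrite andbF.
  rewrite eta2_sum; apply: eq_bigr => i _.
  have [sii|nsi] := eqVneq (s i) i.
    rewrite /= big1 // => j nji.
    by rewrite sii eq_sym (negbTE nji).
  rewrite (bigD1 (s i)) //= eqxx andbT big1 ?addn0 //.
  by move=> j /andP[_ nj]; rewrite eq_sym (negbTE nj).
rewrite exchange_big /= -[n.+2 in RHS]card_ord -sum_nat_const.
apply: eq_bigr => i _; rewrite exchange_big /=.
rewrite (eq_bigr (fun _ => F n x)); last by move=> j nji; rewrite swap_count // eq_sym.
by rewrite sum_nat_const cardC1 card_ord.
Qed.

Lemma L1 N : \sum_(x < N.+1) F N x = N`!.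
Proof.
rewrite (eq_bigr (fun x : 'I_N.+1 => \sum_(s : 'S_N) (eta1 s == x : nat))); last first.
  by move=> x _; rewrite F_sum.
rewrite -card_Sn -sum1_card.
rewrite exchange_big /=; apply: eq_bigr => s _.
have le : eta1 s < N.+1.
  by rewrite ltnS /eta1 -[X in _ <= X]card_ord max_card.
rewrite (bigD1 (Ordinal le)) //= eqxx big1 // => k nk.
case: eqP => // ek; case/eqP: nk; apply: val_inj; by rewrite /= ek.
Qed.

Lemma Fbin m x : F (m + x) x = 'C(m + x, x) * F m 0.
Proof.
elim: x => [|x IH]; first by rewrite addn0 bin0 mul1n.
apply/eqP; rewrite -(eqn_pmul2l (ltn0Sn x)) addnS L2 IH mulnA.
by rewrite mulnA -mul_bin_diag.
Qed.

From mathcomp Require Import ring lra zify.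
Local Open Scope ring_scope.
Fixpoint E (m : nat) : rat :=
  if m is k.+1 then k.+1%:R * E k + (-1) ^+ k.+1 else 1.

Lemma altsum n : \sum_(k < n.+1) ('C(n.+1, k))%:R * (-1) ^+ (n.+1 - k) + 1 = 0 :> rat.
Proof.
have := exprDn (-1 : rat) 1 n.+1.
rewrite addNr expr0n /= big_ord_recr /= subnn expr0 expr1n mul1r binn => /esym h.
apply: etrans _ h; congr (_ + _); apply: eq_bigr => k _.
by rewrite expr1n mulr1 mulr_natl.
Qed.

Lemma Esum n : \sum_(k < n.+1) ('C(n, k))%:R * E (n - k) = (n`!)%:R.
Proof.
elim: n => [|n IH]; first by rewrite big_ord1 /= bin0 mul1r.
rewrite big_ord_recr /= subnn binn mul1r.
have -> : \sum_(k < n.+1) ('C(n.+1, k))%:R * E (n.+1 - k) =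
   n.+1%:R * \sum_(k < n.+1) ('C(n, k))%:R * E (n - k) +
   \sum_(k < n.+1) ('C(n.+1, k))%:R * (-1) ^+ (n.+1 - k).
  rewrite mulr_sumr -big_split /=; apply: eq_bigr => k _.
  have kn : (k <= n)%N by rewrite -ltnS.
  rewrite subSn //= mulrDr mulrA.
  have h : ('C(n.+1,k) * (n-k).+1 = n.+1 * 'C(n,k))%N by rewrite mulnC -subSn // -mul_bin_down.
  rewrite -natrM h natrM; ring.
by rewrite IH -addrA altsum addr0 -natrM factS.
Qed.

Lemma Dsum n : \sum_(k < n.+1) ('C(n, k))%:R * (F (n - k) 0)%:R = (n`!)%:R :> rat.
Proof.
rewrite -L1 natr_sum; apply: eq_bigr => k _.
have kn : (k <= n)%N by rewrite -ltnS.
by have := Fbin (n - k) k; rewrite subnK // => ->; rewrite natrM.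
Qed.

Lemma DE m : (F m 0)%:R = E m.
Proof.
suff : forall j, (j <= m)%N -> (F j 0)%:R - E j = 0 by move/(_ m (leqnn m))/eqP; rewrite subr_eq0 => /eqP.
have hs : forall n, \sum_(k < n.+1) ('C(n, k))%:R * ((F (n - k) 0)%:R - E (n - k)) = 0.
  move=> n; under eq_bigr do rewrite mulrBr.
  by rewrite sumrB Dsum Esum subrr.
elim: m => [|m IH] j.
  rewrite leqn0 => /eqP ->; have := hs 0%N; rewrite big_ord1 bin0 mul1r subn0 //.
rewrite leq_eqVlt => /orP[/eqP ->|]; last by rewrite ltnS; apply: IH.
have := hs m.+1; rewrite big_ord_recl /= bin0 mul1r subn0 big1 ?addr0 //.
move=> k _; rewrite /bump /= add1n subSS IH ?mulr0 // leq_subr //.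
Qed.

Lemma Erec2 k : (k.+2 * k.+1)%:R * E k - E k.+2 = (-1) ^+ k * k.+1%:R.
Proof. rewrite /= !exprS natrM; ring. Qed.

Lemma sign_ge n : -1 <= (-1) ^+ n :> rat.
Proof.
have : (-1 : rat) ^+ n = 1 \/ (-1 : rat) ^+ n = -1.
  elim: n => [|n [h|h]]; rewrite ?expr0; [by left|right|left];
    by rewrite exprS h ?mulr1 ?mulrNN ?mulr1.
by case=> ->; lra.
Qed.

Lemma Ebound k : ((k.+1)`!)%:R <= E k.+2.
Proof.
elim: k => [|k IH]; first by rewrite /= !exprS expr0 (_ : (1`!)%:R = 1 :> rat) //; lra.
have f1 : 1 <= ((k.+1)`!)%:R :> rat by rewrite ler1n fact_gt0.
have := sign_ge k.+3.
have -> : E k.+3 = k.+3%:R * E k.+2 + (-1) ^+ k.+3 by [].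
have -> : ((k.+2)`!)%:R = k.+2%:R * ((k.+1)`!)%:R :> rat by rewrite factS natrM.
have -> : k.+3%:R = k%:R + 3 :> rat by rewrite -addn3 natrD.
have -> : k.+2%:R = k%:R + 2 :> rat by rewrite -addn2 natrD.
have hk : 0 <= k%:R :> rat by rewrite ler0n.
move: IH f1 hk; set f := ((k.+1)`!)%:R; set e := E k.+2; set s := (-1) ^+ k.+3.
move=> IH f1 hk hs.
have h1 : (k%:R + 3) * f <= (k%:R + 3) * e by rewrite ler_wpM2l // addr_ge0.
lra.
Qed.

Lemma binD k x : ((k + x).+2 * (k + x).+1 * 'C(k + x, x) =
   'C((k + x).+2, x) * (k.+2 * k.+1))%N.
Proof.
have h1 := mul_bin_down (k + x).+1 x.
have h2 := mul_bin_down (k + x).+2 x.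
have e1 : ((k + x).+1 - x = k.+1)%N by lia.
have e2 : ((k + x).+2 - x = k.+2)%N by lia.
rewrite e1 /= in h1; rewrite e2 /= in h2.
rewrite -mulnA h1 mulnCA h2 mulnA; lia.
Qed.

Theorem proposition4p1 (N x : nat) :
  (2 <= N)%N -> (x <= N - 2)%N ->
  `|2 * p N x - 1| <= 1 / ((N - x - 2)`!)%:R.
Proof.
move=> hN hx.
have [k ->] : exists k, N = (k + x).+2 by exists (N - x - 2)%N; lia.
rewrite (_ : ((k + x).+2 - x - 2 = k)%N); last by lia.
rewrite /p -natr_sum -/(F _ x).
set G := (\sum_(s | eta1 s == x) eta2 s)%N.
have hG : (2 * G = 'C((k + x).+2, x) * (k.+2 * k.+1) * F k 0)%N.
  by rewrite /G L3 (Fbin k x) !mulnA binD !mulnA.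
have hB : F (k + x).+2 x = ('C((k + x).+2, x) * F k.+2 0)%N.
  by have := Fbin k.+2 x; rewrite !addSn.
set c : rat := ('C((k + x).+2, x))%:R.
have cpos : 0 < c by rewrite /c ltr0n bin_gt0; lia.
have fpos : 0 < (k`!)%:R :> rat by rewrite ltr0n fact_gt0.
have eb := Ebound k.
have eb' : k.+1%:R * (k`!)%:R <= E k.+2 by rewrite -natrM -factS.
have epos : 0 < E k.+2.
  apply: Order.POrderTheory.lt_le_trans eb; by rewrite ltr0n fact_gt0.
have hGr : 2 * G%:R = c * (k.+2 * k.+1)%:R * E k.
  by rewrite -DE -!natrM -hG natrM.
have hFr : (F (k + x).+2 x)%:R = c * E k.+2 by rewrite hB natrM DE.
have key : 2 * (G%:R / (F (k + x).+2 x)%:R) - 1 = (-1) ^+ k * k.+1%:R / E k.+2.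
  rewrite hFr mulrA hGr -Erec2; field.
  by apply/andP; split; rewrite Order.POrderTheory.gt_eqF.
rewrite key !normrM normr_sign mul1r normfV !gtr0_norm // ?ltr0n //.
rewrite ler_pdivrMr // -subr_ge0.
rewrite (_ : (k`!)%:R^-1 * E k.+2 - 1 * k.+1%:R = (E k.+2 - k.+1%:R * (k`!)%:R) / (k`!)%:R).
  by apply: divr_ge0; [rewrite subr_ge0 | apply: Order.POrderTheory.ltW].
by field; rewrite Order.POrderTheory.gt_eqF.
Qed.
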